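(* Let $t\le T$, $\omega_1(0)\in L_2(\Omega)$, $u_1\in L_4(\Omega^t)$, $F_1\in L_2(0,t;L_{6/5}(\Omega))$, and let $\omega_1$ solve \[\omega_{1,t}+\bm v\cdot\nabla\omega_1-\nu\Big(\Delta\omega_1+\frac2r\omega_{1,r}\Big)=2u_1u_{1,z}+F_1\ \text{in }\Omega^t,\qquad\omega_1=0\ \text{on }S^t,\qquad\omega_1|_{t=0}=\omega_1(0).\] Then \[\frac12\int_\Omega\omega_1^2\,dx+\frac\nu2\int_{\Omega^t}|\nabla\omega_1|^2dx\,dt'+\nu\int_0^t\int_{-a}^a\omega_1^2\big|_{r=0}dz\,dt'\le\frac1\nu\int_{\Omega^t}u_1^4dx\,dt'+c\|F_1\|_{L_2(0,t;L_{6/5}(\Omega))}^2+\int_\Omega\omega_1^2(0)\,dx,\] where the first term on the left is evaluated at time $t$.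
   Context: $\Omega=\{x\in\mathbb R^3: r<R,|z|<a\}$ in cylindrical coordinates, $S=\partial\Omega$, $\Omega^t=\Omega\times(0,t)$, $S^t=S\times(0,t)$, $\nu>0$. $\bm v=v_r\bar e_r+v_\varphi\bar e_\varphi+v_z\bar e_z$ is an axially symmetric solution of the Navier–Stokes equations $\bm v_t+(\bm v\cdot\nabla)\bm v-\nu\Delta\bm v+\nabla p=\bm f$, $\operatorname{div}\bm v=0$ in $\Omega$ with $\bm v\cdot\bar n=0$, $v_\varphi=0$, $\omega_\varphi=v_{r,z}-v_{z,r}=0$ on $S$. $u_1=v_\varphi/r$, $\omega_1=\omega_\varphi/r$, $F_1=F_\varphi/r$ with $F_\varphi=(\operatorname{rot}\bm f)\cdot\bar e_\varphi$. $\nabla=\bar e_r\partial_r+\bar e_z\partial_z$, $\Delta=\partial_r^2+\frac1r\partial_r+\partial_z^2$. $c$ is a generic positive constant. Solutions are assumed regular enough for the computations. *)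

(* Defs.v *)
From Stdlib Require Import Reals.
From Coquelicot Require Import Coquelicot.
Open Scope R_scope.

(* Axially symmetric scalar fields are represented as functions of
   (r, z, s) (cylindrical radius, height, time).  *)
Definition field3 := R -> R -> R -> R.

Definition d_r (f : field3) : field3 := fun r z s => Derive (fun r' => f r' z s) r.
Definition d_z (f : field3) : field3 := fun r z s => Derive (fun z' => f r z' s) z.
Definition d_s (f : field3) : field3 := fun r z s => Derive (fun s' => f r z s') s.

Definition cont3 (f : field3) : Prop :=
  forall r z s eps, 0 < eps -> exists delta, 0 < delta /\
    forall r' z' s', Rabs (r' - r) < delta -> Rabs (z' - z) < delta ->
      Rabs (s' - s) < delta -> Rabs (f r' z' s' - f r z s) < eps.

Definition C1_3 (f : field3) : Prop :=
  cont3 f /\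
  (forall r z s, ex_derive (fun r' => f r' z s) r) /\
  (forall r z s, ex_derive (fun z' => f r z' s) z) /\
  (forall r z s, ex_derive (fun s' => f r z s') s) /\
  cont3 (d_r f) /\ cont3 (d_z f) /\ cont3 (d_s f).

Definition reg2 (f : field3) : Prop :=
  C1_3 f /\
  (forall r z s, ex_derive (fun r' => d_r f r' z s) r) /\
  (forall r z s, ex_derive (fun z' => d_z f r z' s) z) /\
  cont3 (d_r (d_r f)) /\ cont3 (d_z (d_z f)).

(* Power x^y for x >= 0 (with 0^y = 0 for y > 0); Stdlib's Rpower is only
   meaningful for x > 0. *)
Definition rpow (x y : R) : R := if Rle_dec x 0 then 0 else Rpower x y.

(* Integral over Omega = {r < Rr, |z| < a} of an axially symmetric function
   g(r,z):  int_Omega g dx = 2 pi int_{-a}^{a} int_0^{Rr} g(r,z) r dr dz. *)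
Definition int_Omega (Rr a : R) (g : R -> R -> R) : R :=
  2 * PI * RInt (fun z => RInt (fun r => g r z * r) 0 Rr) (- a) a.

Definition int_Omega_t (Rr a t : R) (f : field3) : R :=
  RInt (fun s => int_Omega Rr a (fun r z => f r z s)) 0 t.

Definition Lp_Omega (Rr a p : R) (g : R -> R -> R) : R :=
  rpow (int_Omega Rr a (fun r z => rpow (Rabs (g r z)) p)) (1 / p).

Definition L2Lp_Omega_t (Rr a p t : R) (f : field3) : R :=
  sqrt (RInt (fun s => (Lp_Omega Rr a p (fun r z => f r z s)) ^ 2) 0 t).

(* Main.v *)
Require Import Defs.
From Stdlib Require Import Reals.
From Coquelicot Require Import Coquelicot.
From Stdlib Require Import Lra Psatz ClassicalEpsilon.
Open Scope R_scope.

Lemma exR_plus f g a b : ex_RInt f a b -> ex_RInt g a b -> ex_RInt (fun x => f x + g x) a b.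
Proof. intros; apply (ex_RInt_plus (V:=R_NormedModule)); auto. Qed.
Lemma exR_minus f g a b : ex_RInt f a b -> ex_RInt g a b -> ex_RInt (fun x => f x - g x) a b.
Proof. intros; apply (ex_RInt_minus (V:=R_NormedModule)); auto. Qed.
Lemma exR_scal f c a b : ex_RInt f a b -> ex_RInt (fun x => c * f x) a b.
Proof. intros; apply (ex_RInt_scal (V:=R_NormedModule)); auto. Qed.
Lemma exR_cont (f : R -> R) a b : (forall x, @continuous R_UniformSpace R_UniformSpace f x) -> ex_RInt f a b.
Proof. intros; apply (ex_RInt_continuous (V:=R_CompleteNormedModule)); auto. Qed.
Lemma RIntR_plus f g a b : ex_RInt f a b -> ex_RInt g a b -> RInt (fun x => f x + g x) a b = RInt f a b + RInt g a b.
Proof. intros; apply (RInt_plus (V:=R_CompleteNormedModule)); auto. Qed.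
Lemma RIntR_minus f g a b : ex_RInt f a b -> ex_RInt g a b -> RInt (fun x => f x - g x) a b = RInt f a b - RInt g a b.
Proof. intros; apply (RInt_minus (V:=R_CompleteNormedModule)); auto. Qed.
Lemma RIntR_scal f c a b : ex_RInt f a b -> RInt (fun x => c * f x) a b = c * RInt f a b.
Proof. intros; apply (RInt_scal (V:=R_CompleteNormedModule)); auto. Qed.
Lemma RIntR_swap f a b : ex_RInt f a b -> RInt f b a = - RInt f a b.
Proof. intros H; rewrite <- (opp_RInt_swap (V:=R_CompleteNormedModule) f a b H); reflexivity. Qed.
Lemma RIntR_const c a b : RInt (fun _ => c) a b = (b - a) * c.
Proof. apply (RInt_const (V:=R_CompleteNormedModule)). Qed.
Lemma RIntR_point f a : RInt f a a = 0.
Proof. apply (RInt_point (V:=R_CompleteNormedModule)). Qed.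
Lemma RIntR_ge0 f a b : a <= b -> ex_RInt f a b -> (forall x, a < x < b -> 0 <= f x) -> 0 <= RInt f a b.
Proof. intros Hab Hf H.
  assert (H1 := RInt_le (fun _ => 0) f a b Hab (exR_cont _ _ _ (fun x => continuous_const _ x)) Hf H).
  rewrite RIntR_const in H1. lra. Qed.

Definition C2 (g : R -> R -> R) := forall x y, continuity_2d_pt g x y.

Lemma cont3_comp2 (phi : R -> R -> R) f g :
  C2 phi -> cont3 f -> cont3 g -> cont3 (fun r z s => phi (f r z s) (g r z s)).
Proof.
  intros Hp Hf Hg r z s eps Heps.
  destruct (Hp (f r z s) (g r z s) (mkposreal eps Heps)) as [d1 Hd1].
  destruct (Hf r z s d1 (cond_pos d1)) as [df [Hdf Hf']].
  destruct (Hg r z s d1 (cond_pos d1)) as [dg [Hdg Hg']].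
  exists (Rmin df dg); split. apply Rmin_pos; auto.
  intros r' z' s' H1 H2 H3.
  apply (Hd1 (f r' z' s') (g r' z' s')).
  - apply Hf'; eapply Rlt_le_trans; eauto; apply Rmin_l.
  - apply Hg'; eapply Rlt_le_trans; eauto; apply Rmin_r.
Qed.

Lemma cont3_comp1 (phi : R -> R) f :
  (forall x, continuity_pt phi x) -> cont3 f -> cont3 (fun r z s => phi (f r z s)).
Proof.
  intros Hp Hf r z s eps Heps.
  destruct (Hp (f r z s) eps Heps) as [d1 [Hd1 Hd1']].
  destruct (Hf r z s d1 Hd1) as [df [Hdf Hf']].
  exists df; split; auto.
  intros r' z' s' H1 H2 H3.
  destruct (Req_dec (f r' z' s') (f r z s)) as [E|E].
  - rewrite E, Rminus_eq_0, Rabs_R0; auto.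
  - apply (Hd1' (f r' z' s')). split. split. exact I. auto.
    simpl; unfold R_dist; auto.
Qed.

Lemma cont3_const c : cont3 (fun _ _ _ => c).
Proof. intros r z s eps Heps; exists 1; split; [lra|]; intros; rewrite Rminus_eq_0, Rabs_R0; auto. Qed.

Lemma cont3_r : cont3 (fun r _ _ => r).
Proof. intros r z s eps Heps; exists eps; split; auto. Qed.

Lemma C2_mult : C2 Rmult.
Proof. intros x y. apply (continuity_2d_pt_mult (fun u v => u) (fun u v => v)); [apply continuity_2d_pt_id1|apply continuity_2d_pt_id2]. Qed.
Lemma C2_plus : C2 Rplus.
Proof. intros x y. apply (continuity_2d_pt_plus (fun u v => u) (fun u v => v)); [apply continuity_2d_pt_id1|apply continuity_2d_pt_id2]. Qed.

Lemma cont3_mult f g : cont3 f -> cont3 g -> cont3 (fun r z s => f r z s * g r z s).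
Proof. intros; apply (cont3_comp2 Rmult); auto; apply C2_mult. Qed.
Lemma cont3_plus f g : cont3 f -> cont3 g -> cont3 (fun r z s => f r z s + g r z s).
Proof. intros; apply (cont3_comp2 Rplus); auto; apply C2_plus. Qed.
Lemma cont3_ext f g : (forall r z s, f r z s = g r z s) -> cont3 f -> cont3 g.
Proof. intros E H r z s eps He; destruct (H r z s eps He) as [d [Hd H']]; exists d; split; auto; intros; rewrite <- !E; auto. Qed.

Lemma cont3_slice f s : cont3 f -> C2 (fun r z => f r z s).
Proof.
  intros H x y eps. destruct (H x y s eps (cond_pos eps)) as [d [Hd H']].
  exists (mkposreal d Hd); simpl; intros u v H1 H2. apply H'; auto. rewrite Rminus_eq_0, Rabs_R0; auto.
Qed.

Lemma cont3_unif G a b z s eps : cont3 G -> 0 < eps ->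
  exists d, 0 < d /\ forall r z' s', a <= r <= b -> Rabs (z' - z) < d -> Rabs (s' - s) < d ->
    Rabs (G r z' s' - G r z s) < eps.
Proof.
  intros HG He.
  assert (He2 : 0 < eps / 2) by lra.
  assert (Hd : forall t, {d : posreal | forall r' z' s', Rabs (r' - t) < d -> Rabs (z' - z) < d ->
      Rabs (s' - s) < d -> Rabs (G r' z' s' - G t z s) < eps / 2}).
  { intros t. apply constructive_indefinite_description.
    destruct (HG t z s (eps/2) He2) as [d [Hd H']]. exists (mkposreal d Hd); auto. }
  destruct (compactness_value_1d a b (fun t => proj1_sig (Hd t))) as [d Hdd].
  exists d; split. apply cond_pos.
  intros r z' s' Hr Hz Hs.
  destruct (Rlt_dec (Rabs (G r z' s' - G r z s)) eps) as [ok|nok]; auto.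
  exfalso. apply (Hdd r Hr). intros [t [Ht [Hrt Hdt]]].
  apply nok.
  pose proof (proj2_sig (Hd t)) as Hdt'. simpl in Hdt'.
  assert (A1 := Hdt' r z' s' Hrt (Rlt_le_trans _ _ _ Hz Hdt) (Rlt_le_trans _ _ _ Hs Hdt)).
  assert (A2 := Hdt' r z s Hrt ltac:(rewrite Rminus_eq_0, Rabs_R0; apply (cond_pos (proj1_sig (Hd t)))) ltac:(rewrite Rminus_eq_0, Rabs_R0; apply (cond_pos (proj1_sig (Hd t))))).
  replace (G r z' s' - G r z s) with ((G r z' s' - G t z s) - (G r z s - G t z s)) by ring.
  unfold Rminus at 1. eapply Rle_lt_trans. apply Rabs_triang. rewrite Rabs_Ropp. lra.
Qed.

Lemma C2_cont1 g y x : C2 g -> continuous (fun x => g x y) x.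
Proof.
  intros H. apply continuity_pt_filterlim. intros eps Heps.
  destruct (H x y (mkposreal eps Heps)) as [d Hd].
  exists d; split. apply cond_pos. intros u [_ Hu]. simpl in Hu; unfold R_dist in Hu |- *.
  apply Hd; auto. rewrite Rminus_eq_0, Rabs_R0; apply cond_pos.
Qed.
Lemma C2_cont2 g x y : C2 g -> continuous (fun y => g x y) y.
Proof.
  intros H. apply continuity_pt_filterlim. intros eps Heps.
  destruct (H x y (mkposreal eps Heps)) as [d Hd].
  exists d; split. apply cond_pos. intros u [_ Hu]. simpl in Hu; unfold R_dist in Hu |- *.
  apply Hd; auto. rewrite Rminus_eq_0, Rabs_R0; apply cond_pos.
Qed.
Lemma C2_ex_RInt1 g y a b : C2 g -> ex_RInt (fun x => g x y) a b.
Proof. intros H; apply exR_cont; intros; apply C2_cont1; auto. Qed.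
Lemma C2_ex_RInt2 g x a b : C2 g -> ex_RInt (fun y => g x y) a b.
Proof. intros H; apply exR_cont; intros; apply C2_cont2; auto. Qed.

Lemma param2_le G a b : cont3 G -> a <= b -> C2 (fun z s => RInt (fun r => G r z s) a b).
Proof.
  intros HG Hab z s eps.
  set (e := eps / (b - a + 1)).
  assert (He : 0 < e) by (unfold e; apply Rdiv_lt_0_compat; [apply cond_pos|lra]).
  destruct (cont3_unif G a b z s e HG He) as [d [Hd Hu]].
  exists (mkposreal d Hd); simpl; intros u v H1 H2.
  assert (E1 := C2_ex_RInt1 (fun r z => G r z v) u a b (cont3_slice G v HG)).
  assert (E2 := C2_ex_RInt1 (fun r z => G r z s) z a b (cont3_slice G s HG)).
  simpl in E1, E2.
  assert (E := RInt_minus _ _ a b E1 E2). unfold minus, plus, opp in E; simpl in E.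
  change (Rplus (RInt (fun r : R => G r u v) a b) (Ropp (RInt (fun r : R => G r z s) a b))) with
    (RInt (fun r : R => G r u v) a b - RInt (fun r : R => G r z s) a b) in E.
  rewrite <- E.
  eapply Rle_lt_trans. apply (abs_RInt_le_const _ a b e Hab).
  apply exR_minus; auto.
  intros t Ht. apply Rlt_le. apply Hu; auto.
  unfold e. assert (0 < eps) by apply cond_pos.
  replace ((b-a)*(eps/(b-a+1))) with (eps * ((b-a)/(b-a+1))) by (field; lra).
  apply Rlt_le_trans with (eps*1); [|lra]. apply Rmult_lt_compat_l; auto.
  apply Rmult_lt_reg_r with (b-a+1); [lra|]. unfold Rdiv; rewrite Rmult_assoc, Rinv_l; lra.
Qed.

Lemma param2 G a b : cont3 G -> C2 (fun z s => RInt (fun r => G r z s) a b).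
Proof.
  intros HG. destruct (Rle_dec a b) as [H|H]. apply param2_le; auto.
  assert (C := param2_le G b a HG ltac:(lra)).
  intros z s. apply continuity_2d_pt_ext with (fun z s => - RInt (fun r => G r z s) b a).
  intros x y. rewrite <- (opp_RInt_swap (fun r => G r x y) b a). reflexivity.
  apply C2_ex_RInt1 with (g := fun r z => G r z y). apply cont3_slice; auto.
  apply continuity_2d_pt_opp; auto.
Qed.

Lemma param1 (g : R -> R -> R) a b : C2 g -> forall p, continuous (fun p => RInt (g p) a b) p.
Proof.
  intros Hg p.
  assert (HG : cont3 (fun r z s => g z r)).
  { intros r z s eps Heps. destruct (Hg z r (mkposreal eps Heps)) as [d Hd].
    exists d; split. apply cond_pos. intros; simpl; apply Hd; auto. }
  assert (C := param2 _ a b HG).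
  apply (C2_cont1 (fun z s => RInt (fun r => g z r) a b) 0 p C).
Qed.

Lemma FTC_var (f : R -> R) a x : (forall y, continuous f y) ->
  is_derive (fun x => RInt f a x) x (f x).
Proof.
  intros Hf. apply (is_derive_RInt (V:=R_NormedModule) f (fun x => RInt f a x) a x).
  apply filter_forall. intros y. apply (RInt_correct (V:=R_CompleteNormedModule)). apply exR_cont; auto.
  apply Hf.
Qed.

Lemma C2_swap g : C2 g -> C2 (fun x y => g y x).
Proof. intros H x y eps. destruct (H y x eps) as [d Hd]. exists d. intros u v H1 H2. apply Hd; auto. Qed.

Lemma fubini g a b c d : C2 g ->
  RInt (fun z => RInt (fun r => g r z) a b) c d = RInt (fun r => RInt (fun z => g r z) c d) a b.
Proof.
  intros Hg.
  set (Phi := fun x => RInt (fun z => RInt (fun r => g r z) a x) c d).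
  set (Psi := fun x => RInt (fun r => RInt (fun z => g r z) c d) a x).
  set (k := fun x => RInt (fun z => g x z) c d).
  assert (Hk : forall x, continuous k x) by (intros; apply (param1 g c d Hg)).
  assert (DPsi : forall x, is_derive Psi x (k x)) by (intros; apply FTC_var; auto).
  assert (DPhi : forall x, is_derive Phi x (k x)).
  { intros x. unfold Phi, k.
    assert (H := is_derive_RInt_param (fun x t => RInt (fun r => g r t) a x) c d x).
    rewrite (RInt_ext (fun t => Derive (fun u => RInt (fun r => g r t) a u) x) (fun z => g x z)) in H.
    apply H.
    - apply filter_forall. intros y t _. eexists. apply (FTC_var (fun r => g r t)). intros; apply C2_cont1; auto.
    - intros t _. apply continuity_2d_pt_ext with g.
      intros u v. symmetry. apply is_derive_unique. apply (FTC_var (fun r => g r v)). intros; apply C2_cont1; auto.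
      apply Hg.
    - apply filter_forall. intros y. apply exR_cont. intros z.
      apply (param1 (fun z r => g r z) a y). apply C2_swap; auto.
    - intros t _. apply is_derive_unique. apply (FTC_var (fun r => g r t)). intros; apply C2_cont1; auto. }
  assert (Hh := is_RInt_derive (V:=R_CompleteNormedModule) (fun x => Phi x - Psi x) (fun _ => 0) a b).
  assert (H0 : is_RInt (fun _ : R => 0) a b (minus (Phi b - Psi b) (Phi a - Psi a))).
  { apply Hh. intros x _. replace 0 with (k x - k x) by ring. apply (is_derive_minus (K:=R_AbsRing) (V:=R_NormedModule)); auto.
    intros; apply continuous_const. }
  apply (is_RInt_unique (V:=R_CompleteNormedModule)) in H0. rewrite RIntR_const in H0. unfold minus, plus, opp in H0; simpl in H0.
  assert (Pa : Phi a = 0).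
  { unfold Phi. rewrite (RInt_ext _ (fun _ => 0)); [rewrite RIntR_const; simpl; ring| intros; apply RIntR_point]. }
  assert (Sa : Psi a = 0) by (unfold Psi; apply RIntR_point).
  change (Phi b = Psi b). lra.
Qed.

Lemma C2_const c : C2 (fun _ _ => c).
Proof. intros x y; apply continuity_2d_pt_const. Qed.
Lemma C2_id1 : C2 (fun u _ => u).
Proof. intros x y; apply continuity_2d_pt_id1. Qed.
Lemma C2_id2 : C2 (fun _ v => v).
Proof. intros x y; apply continuity_2d_pt_id2. Qed.
Lemma C2_plusf f g : C2 f -> C2 g -> C2 (fun u v => f u v + g u v).
Proof. intros Hf Hg x y; apply continuity_2d_pt_plus; auto. Qed.
Lemma C2_minusf f g : C2 f -> C2 g -> C2 (fun u v => f u v - g u v).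
Proof. intros Hf Hg x y; apply continuity_2d_pt_minus; auto. Qed.
Lemma C2_multf f g : C2 f -> C2 g -> C2 (fun u v => f u v * g u v).
Proof. intros Hf Hg x y; apply continuity_2d_pt_mult; auto. Qed.
Lemma C2_comp1 (phi : R -> R) f : (forall x, continuity_pt phi x) -> C2 f -> C2 (fun u v => phi (f u v)).
Proof. intros Hp Hf x y; apply continuity_1d_2d_pt_comp; auto. Qed.
Lemma C2_abs f : C2 f -> C2 (fun u v => Rabs (f u v)).
Proof. apply C2_comp1. intros; apply Rcontinuity_abs. Qed.
Lemma C2_pow f n : C2 f -> C2 (fun u v => (f u v) ^ n).
Proof. apply (C2_comp1 (fun x => x ^ n)). intros; apply derivable_continuous_pt, derivable_pt_pow. Qed.
Lemma C2_ext f g : (forall u v, f u v = g u v) -> C2 f -> C2 g.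
Proof. intros E H x y; apply continuity_2d_pt_ext with f; auto. Qed.

Definition D (Rr a : R) (g : R -> R -> R) := RInt (fun z => RInt (fun r => g r z) 0 Rr) (-a) a.

Lemma D_inner_cont g b c : C2 g -> forall z, continuous (fun z => RInt (fun r => g r z) b c) z.
Proof. intros H z. apply (param1 (fun z r => g r z) b c). apply C2_swap; auto. Qed.

Lemma D_ex Rr a g : C2 g -> ex_RInt (fun z => RInt (fun r => g r z) 0 Rr) (-a) a.
Proof. intros H; apply exR_cont; apply D_inner_cont; auto. Qed.

Lemma D_plus Rr a f g : C2 f -> C2 g -> D Rr a (fun u v => f u v + g u v) = D Rr a f + D Rr a g.
Proof.
  intros Hf Hg. unfold D. rewrite <- RIntR_plus by (apply D_ex; auto).
  apply RInt_ext. intros z _. apply RIntR_plus; apply C2_ex_RInt1; auto.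
Qed.
Lemma D_scal Rr a c f : C2 f -> D Rr a (fun u v => c * f u v) = c * D Rr a f.
Proof.
  intros Hf. unfold D. rewrite <- RIntR_scal by (apply D_ex; auto).
  apply RInt_ext. intros z _. apply RIntR_scal; apply C2_ex_RInt1; auto.
Qed.
Lemma D_ext Rr a f g : 0 <= Rr -> 0 <= a -> (forall r z, 0 < r < Rr -> - a < z < a -> f r z = g r z) -> D Rr a f = D Rr a g.
Proof.
  intros HR Ha E. unfold D. apply RInt_ext. intros z Hz. rewrite Rmin_left in Hz by lra. rewrite Rmax_right in Hz by lra.
  apply RInt_ext. intros r Hr. rewrite Rmin_left in Hr by lra. rewrite Rmax_right in Hr by lra. apply E; lra.
Qed.
Lemma D_le Rr a f g : 0 <= Rr -> 0 <= a -> C2 f -> C2 g ->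
  (forall r z, 0 < r < Rr -> - a < z < a -> f r z <= g r z) -> D Rr a f <= D Rr a g.
Proof.
  intros HR Ha Hf Hg E. unfold D. apply RInt_le; try lra; try (apply D_ex; auto).
  intros z Hz. apply RInt_le; try lra; try (apply C2_ex_RInt1; auto). intros; apply E; lra.
Qed.
Lemma D_ge0 Rr a f : 0 <= Rr -> 0 <= a -> C2 f ->
  (forall r z, 0 < r < Rr -> - a < z < a -> 0 <= f r z) -> 0 <= D Rr a f.
Proof.
  intros HR Ha Hf E. replace 0 with (D Rr a (fun _ _ => 0)). apply D_le; auto. apply C2_const.
  unfold D. rewrite (RInt_ext _ (fun _ => 0)); [rewrite RIntR_const; simpl; ring| intros; rewrite RIntR_const; simpl; ring].
Qed.
Lemma D_fub Rr a g : C2 g -> D Rr a g = RInt (fun r => RInt (fun z => g r z) (-a) a) 0 Rr.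
Proof. intros; unfold D; apply fubini; auto. Qed.

Lemma lam_lemma Y A C : 0 <= Y -> 0 <= A -> 0 <= C ->
  (forall l, 0 < l -> 2 * l * Y <= l * l * A + C) -> Y * Y <= A * C.
Proof.
  intros HY HA HC H.
  destruct (Req_dec Y 0) as [E|E]. subst; nra.
  destruct (Req_dec A 0) as [EA|EA].
  - exfalso. assert (Hl := H ((C + 1) / (2 * Y)) ltac:(apply Rdiv_lt_0_compat; lra)).
    subst A. replace (2 * ((C + 1) / (2 * Y)) * Y) with (C + 1) in Hl by (field; lra). lra.
  - assert (Hl := H (Y / A) ltac:(apply Rdiv_lt_0_compat; lra)).
    replace (2 * (Y / A) * Y) with (2 * (Y * Y) / A) in Hl by (field; lra).
    replace (Y / A * (Y / A) * A) with (Y * Y / A) in Hl by (field; lra).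
    assert (Y * Y / A <= C) by lra.
    apply Rmult_le_reg_r with (/ A). apply Rinv_0_lt_compat; lra.
    replace (A * C * / A) with C by (field; lra). exact H0.
Qed.

Lemma pt_CS l x y w : 0 < l -> 0 <= w -> 2 * l * (Rabs (x * y) * w) <= l * l * (x ^ 2 * w) + y ^ 2 * w.
Proof.
  intros Hl Hw. rewrite Rabs_mult.
  assert (0 <= (l * Rabs x - Rabs y) ^ 2) by apply pow2_ge_0.
  assert (Rabs x ^ 2 = x ^ 2) by apply pow2_abs.
  assert (Rabs y ^ 2 = y ^ 2) by apply pow2_abs.
  rewrite <- H0, <- H1. apply Rmult_le_compat_r with (r := w) in H; auto. nra.
Qed.

Lemma D_CS Rr a f g : 0 <= Rr -> 0 <= a -> C2 f -> C2 g ->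
  (D Rr a (fun r z => Rabs (f r z * g r z) * r)) ^ 2 <=
  D Rr a (fun r z => f r z ^ 2 * r) * D Rr a (fun r z => g r z ^ 2 * r).
Proof.
  intros HR Ha Hf Hg.
  assert (C1 : C2 (fun r z => Rabs (f r z * g r z) * r)) by (apply C2_multf; [apply C2_abs, C2_multf; auto|apply C2_id1]).
  assert (C3 : C2 (fun r z => f r z ^ 2 * r)) by (apply C2_multf; [apply C2_pow; auto|apply C2_id1]).
  assert (C4 : C2 (fun r z => g r z ^ 2 * r)) by (apply C2_multf; [apply C2_pow; auto|apply C2_id1]).
  simpl pow at 1. rewrite Rmult_1_r. apply lam_lemma.
  - apply D_ge0; auto. intros; apply Rmult_le_pos; [apply Rabs_pos|lra].
  - apply D_ge0; auto. intros; apply Rmult_le_pos; [apply pow2_ge_0|lra].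
  - apply D_ge0; auto. intros; apply Rmult_le_pos; [apply pow2_ge_0|lra].
  - intros l Hl. rewrite <- (D_scal Rr a (2 * l)), <- (D_scal Rr a (l * l)), <- D_plus; auto.
    all: try (apply C2_multf; [apply C2_const|assumption]).
    apply D_le; auto; try (intros r z Hr Hz; apply pt_CS; lra);
    repeat (first [apply C2_plusf | apply C2_multf | apply C2_const | apply C2_id1 | apply C2_abs | assumption]).
Qed.

Lemma I_CS b f g : 0 <= b -> (forall x, continuous f x) -> (forall x, continuous g x) ->
  (RInt (fun r => Rabs (f r * g r) * r) 0 b) ^ 2 <=
  RInt (fun r => f r ^ 2 * r) 0 b * RInt (fun r => g r ^ 2 * r) 0 b.
Proof.
  intros Hb Hf Hg.
  set (F := fun (r z : R) => f r). set (G := fun (r z : R) => g r).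
  assert (HF : C2 F). { intros x y eps. destruct (proj2 (continuity_pt_filterlim f x) (Hf x) eps (cond_pos eps)) as [d [Hd H]].
    exists (mkposreal d Hd). intros u v Hu _. unfold F. destruct (Req_dec u x) as [->|N]. rewrite Rminus_eq_0, Rabs_R0; apply cond_pos.
    apply H. split. split; auto. exact I. exact Hu. }
  assert (HG : C2 G). { intros x y eps. destruct (proj2 (continuity_pt_filterlim g x) (Hg x) eps (cond_pos eps)) as [d [Hd H]].
    exists (mkposreal d Hd). intros u v Hu _. unfold G. destruct (Req_dec u x) as [->|N]. rewrite Rminus_eq_0, Rabs_R0; apply cond_pos.
    apply H. split. split; auto. exact I. exact Hu. }
  assert (K := D_CS b (1/2) F G Hb ltac:(lra) HF HG).
  unfold D, F, G in K. rewrite !RIntR_const in K. 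
  replace (1/2 - - (1/2)) with 1 in K by field. rewrite !Rmult_1_l in K. exact K.
Qed.

Definition Cont1 (f : R -> R) := forall x, @continuous R_UniformSpace R_UniformSpace f x.

Lemma dmult f g x df dg : is_derive f x df -> is_derive g x dg -> is_derive (fun x => f x * g x) x (df * g x + f x * dg).
Proof. intros H1 H2. apply (is_derive_mult (K:=R_AbsRing) f g x df dg H1 H2). intros; apply Rmult_comm. Qed.
Lemma dplus f g x df dg : is_derive f x df -> is_derive g x dg -> is_derive (fun x => f x + g x) x (df + dg).
Proof. intros H1 H2. apply (is_derive_plus (K:=R_AbsRing) (V:=R_NormedModule) f g x df dg H1 H2). Qed.
Lemma dconst (c x : R) : is_derive (fun _ : R => c) x 0.
Proof. apply (is_derive_const (K:=R_AbsRing) (V:=R_NormedModule)). Qed.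
Lemma did (x : R) : is_derive (fun x : R => x) x 1.
Proof. apply (is_derive_id (K:=R_AbsRing)). Qed.
Lemma deq (f : R -> R) (x l l' : R) : is_derive f x l -> l = l' -> is_derive f x l'.
Proof. intros H ->; auto. Qed.

Lemma dcont f df : (forall x, is_derive f x (df x)) -> Cont1 f.
Proof. intros H x. apply (ex_derive_continuous (K:=R_AbsRing) (V:=R_NormedModule)). eexists; apply H. Qed.

Lemma FTC1 P dP a b : (forall x, is_derive P x (dP x)) -> Cont1 dP -> RInt dP a b = P b - P a.
Proof.
  intros H1 H2. apply (is_RInt_unique (V:=R_CompleteNormedModule)).
  apply (is_RInt_derive (V:=R_CompleteNormedModule) P dP a b); intros; auto.
Qed.

Lemma Cont1_C2 f : Cont1 f -> C2 (fun r _ => f r).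
Proof.
  intros Hf x y eps. destruct (proj2 (continuity_pt_filterlim f x) (Hf x) eps (cond_pos eps)) as [d [Hd H]].
  exists (mkposreal d Hd). intros u v Hu _. destruct (Req_dec u x) as [->|N]. rewrite Rminus_eq_0, Rabs_R0; apply cond_pos.
  apply H. split. split; auto. exact I. exact Hu.
Qed.
Lemma C2_Cont1 f : C2 (fun r _ => f r) -> Cont1 f.
Proof. intros H x. apply (C2_cont1 (fun r _ => f r) 0 x H). Qed.
Lemma Cont1_ext f g : (forall x, f x = g x) -> Cont1 f -> Cont1 g.
Proof. intros E H x. apply (continuous_ext f); auto. Qed.

Lemma RInt_abs_le f a b : a <= b -> ex_RInt f a b -> Rabs (RInt f a b) <= RInt (fun t => Rabs (f t)) a b.
Proof. apply abs_RInt_le. Qed.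

Lemma RInt_sub_le g a b c d : a <= c -> c <= d -> d <= b -> Cont1 g -> (forall x, a <= x <= b -> 0 <= g x) ->
  RInt g c d <= RInt g a b.
Proof.
  intros H1 H2 H3 Hg Hp.
  assert (E : forall u v, ex_RInt g u v) by (intros; apply exR_cont; auto).
  rewrite <- (RInt_Chasles (V:=R_CompleteNormedModule) g a c b) by auto.
  rewrite <- (RInt_Chasles (V:=R_CompleteNormedModule) g c d b) by auto.
  simpl. unfold plus; simpl.
  assert (0 <= RInt g a c) by (apply RIntR_ge0; auto; intros; apply Hp; lra).
  assert (0 <= RInt g d b) by (apply RIntR_ge0; auto; intros; apply Hp; lra).
  lra.
Qed.

(* 2D radial Sobolev inequality with L1 gradient *)
Lemma radial_ineq f df R0 : 0 <= R0 -> (forall x, is_derive f x (df x)) -> Cont1 df -> f R0 = 0 ->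
  RInt (fun r => f r ^ 2 * r) 0 R0 <= (RInt (fun r => Rabs (df r) * r) 0 R0) ^ 2.
Proof.
  intros HR Hd Hdc Hf0.
  assert (Hfc : Cont1 f) by (apply (dcont f df); auto).
  assert (Cad : Cont1 (fun r => Rabs (df r))).
  { intros x. apply (continuous_comp df Rabs). apply Hdc. apply continuous_Rabs. }
  assert (Cadr : Cont1 (fun r => Rabs (df r) * r)).
  { apply C2_Cont1. apply (C2_multf (fun r _ => Rabs (df r)) (fun r _ => r)). apply Cont1_C2; auto. apply C2_id1. }
  set (M := RInt (fun r => Rabs (df r) * r) 0 R0).
  set (Gam := fun r => RInt (fun t => Rabs (df t)) r R0).
  assert (DG : forall r, is_derive Gam r (- Rabs (df r))).
  { intros r. apply (is_derive_ext (fun r => - RInt (fun t => Rabs (df t)) R0 r)).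
    intros x. unfold Gam. rewrite (RIntR_swap _ x R0) by (apply exR_cont; auto). simpl; ring.
    apply (is_derive_opp (K:=R_AbsRing) (V:=R_NormedModule)). apply (FTC_var (fun t => Rabs (df t))). auto. }
  assert (CG : Cont1 Gam) by (apply (dcont Gam (fun r => - Rabs (df r))); auto).
  assert (HfG : forall r, 0 <= r <= R0 -> Rabs (f r) <= Gam r).
  { intros r Hr. replace (f r) with (- RInt df r R0).
    rewrite Rabs_Ropp. apply RInt_abs_le. lra. apply exR_cont; auto.
    rewrite (FTC1 f df r R0); auto. lra. }
  assert (HrG : forall r, 0 <= r <= R0 -> r * Gam r <= M).
  { intros r Hr. unfold Gam. rewrite <- RIntR_scal by (apply exR_cont; auto).
    apply Rle_trans with (RInt (fun t => Rabs (df t) * t) r R0).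
    apply RInt_le; try lra. apply exR_cont. apply C2_Cont1. apply (C2_multf (fun _ _ => r) (fun t _ => Rabs (df t))). apply C2_const. apply Cont1_C2; auto.
    apply exR_cont; auto. intros x Hx. rewrite Rmult_comm. apply Rmult_le_compat_l. apply Rabs_pos. lra.
    unfold M. apply RInt_sub_le; auto; try lra. intros; apply Rmult_le_pos; [apply Rabs_pos|lra]. }
  assert (HM : 0 <= M) by (apply RIntR_ge0; auto; [apply exR_cont; auto| intros; apply Rmult_le_pos; [apply Rabs_pos|lra]]).
  assert (IG : RInt Gam 0 R0 = M).
  { assert (DL : forall r, is_derive (fun r => r * Gam r) r (Gam r - Rabs (df r) * r)).
    { intros r. eapply deq. apply dmult. apply did. apply DG. simpl; ring. }
    assert (CL : Cont1 (fun r => Gam r - Rabs (df r) * r)).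
    { apply C2_Cont1. apply (C2_minusf (fun r _ => Gam r) (fun r _ => Rabs (df r) * r)); apply Cont1_C2; auto. }
    assert (K := FTC1 _ _ 0 R0 DL CL).
    rewrite RIntR_minus in K by (apply exR_cont; auto).
    unfold Gam at 2 in K. rewrite RIntR_point in K. fold M in K. lra. }
  apply Rle_trans with (RInt (fun r => Gam r * M) 0 R0).
  - apply RInt_le; auto. apply exR_cont. apply C2_Cont1. apply (C2_multf (fun r _ => f r ^ 2) (fun r _ => r)).
    apply (C2_pow (fun r _ => f r)). apply Cont1_C2; auto. apply C2_id1.
    apply exR_cont. apply C2_Cont1. apply (C2_multf (fun r _ => Gam r) (fun _ _ => M)). apply Cont1_C2; auto. apply C2_const.
    intros r Hr. assert (A1 := HfG r ltac:(lra)). assert (A2 := HrG r ltac:(lra)).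
    assert (A3 : 0 <= Rabs (f r)) by apply Rabs_pos.
    replace (f r ^ 2 * r) with (Rabs (f r) * (Rabs (f r) * r)) by (rewrite <- (pow2_abs (f r)); ring).
    apply Rle_trans with (Rabs (f r) * M). apply Rmult_le_compat_l; auto. apply Rle_trans with (Gam r * r). apply Rmult_le_compat_r; lra. lra.
    apply Rmult_le_compat_r; lra.
  - rewrite (RInt_ext _ (fun r => M * Gam r)) by (intros; simpl; ring). rewrite RIntR_scal by (apply exR_cont; auto). rewrite IG. lra.
Qed.

Lemma C2_sqrt f : C2 f -> C2 (fun u v => sqrt (f u v)).
Proof. apply C2_comp1. intros x. apply continuity_pt_filterlim. apply continuous_sqrt. Qed.

Lemma C2_C1a g y : C2 g -> Cont1 (fun x => g x y).
Proof. intros H x; apply (C2_cont1 g y x H). Qed.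
Lemma C2_C1b g x : C2 g -> Cont1 (fun y => g x y).
Proof. intros H y; apply (C2_cont2 g x y H). Qed.

Ltac c2f := repeat (first [ apply C2_plusf | apply C2_minusf | apply C2_multf | apply C2_abs | apply C2_sqrt
   | apply C2_pow | apply C2_const | apply C2_id1 | apply C2_id2 | assumption ]).

Lemma sob_alg B G P H : 0 <= B -> 0 <= G -> 0 <= P -> 0 <= H ->
  B <= sqrt H * P -> P * P <= 16 * (B * G) -> H * H <= 16 * (B * G) -> B <= 4096 * G ^ 3.
Proof.
  intros HB HG HP HH H1 H2 H3.
  set (S := sqrt (B * G)).
  assert (HS : S * S = B * G) by (apply sqrt_sqrt; nra).
  assert (HS0 : 0 <= S) by apply sqrt_pos.
  assert (H4 : H <= 4 * S) by nra.
  assert (H5 : B * B <= H * (P * P)).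
  { assert (sqrt H * sqrt H = H) by (apply sqrt_sqrt; auto). assert (0 <= sqrt H) by apply sqrt_pos. nra. }
  assert (H6 : B * B <= 64 * (S * S * S)) by nra.
  destruct (Req_dec B 0) as [E|E]. subst; nra.
  assert (HB' : 0 < B) by lra.
  (* B*B <= 64 S^3, S^2 = B G  => B^4 <= 4096 S^6 = 4096 B^3 G^3 *)
  assert (H7 : (B * B) * (B * B) <= 4096 * ((S * S) * (S * S) * (S * S))).
  { assert (0 <= B * B) by nra. assert (0 <= S*S*S) by nra.
    replace (4096 * (S * S * (S * S) * (S * S))) with ((64 * (S*S*S)) * (64 * (S*S*S))) by ring.
    apply Rmult_le_compat; auto. }
  rewrite HS in H7.
  assert (H8 : B * (B * B * B) <= B * (4096 * (G * G * G) * (B * B))) by nra.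
  apply Rmult_le_reg_l in H8; auto.
  assert (0 < B * B) by nra.
  simpl. nra.
Qed.

Section Sob.
Variables (Rr a : R) (W Wr Wz : R -> R -> R).
Hypotheses (HRr : 0 <= Rr) (Ha : 0 <= a)
  (HWr : forall r z, is_derive (fun r => W r z) r (Wr r z))
  (HWz : forall r z, is_derive (fun z => W r z) z (Wz r z))
  (CW : C2 W) (CWr : C2 Wr) (CWz : C2 Wz)
  (BR : forall z, - a <= z <= a -> W Rr z = 0)
  (Bz : forall r, 0 <= r <= Rr -> W r a = 0 /\ W r (- a) = 0).

Lemma sobolev : D Rr a (fun r z => W r z ^ 6 * r) <= 4096 * (D Rr a (fun r z => r * (Wr r z ^ 2 + Wz r z ^ 2))) ^ 3.
Proof.
  set (phz := fun r z => 4 * (W r z ^ 3 * Wz r z)).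
  set (phr := fun r z => 4 * (W r z ^ 3 * Wr r z)).
  assert (Cphz : C2 phz) by (unfold phz; c2f).
  assert (Cphr : C2 phr) by (unfold phr; c2f).
  set (h := fun r => RInt (fun z => Rabs (phz r z)) (-a) a).
  assert (Ch : Cont1 h) by (intros x; apply (param1 (fun r z => Rabs (phz r z))); c2f).
  assert (Ch2 : C2 (fun r _ => h r)) by (apply Cont1_C2; auto).
  assert (h0 : forall r, 0 <= h r) by (intros; apply RIntR_ge0; [lra| apply (C2_ex_RInt2 (fun r z => Rabs (phz r z))); c2f| intros; apply Rabs_pos]).
  assert (Dz : forall r z, is_derive (fun z => W r z ^ 4) z (phz r z)).
  { intros r z. eapply deq. apply is_derive_pow. apply HWz. unfold phz; simpl; ring. }
  assert (Dr : forall r z, is_derive (fun r => W r z ^ 4) r (phr r z)).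
  { intros r z. eapply deq. apply (is_derive_pow (fun r => W r z)). apply HWr. unfold phr; simpl; ring. }
  assert (S1 : forall r z, 0 <= r <= Rr -> - a <= z <= a -> W r z ^ 4 <= h r).
  { intros r z Hr Hz.
    assert (E : W r z ^ 4 = RInt (phz r) (-a) z).
    { rewrite (FTC1 (fun z => W r z ^ 4) (phz r)); auto. rewrite (proj2 (Bz r Hr)). simpl; ring.
      apply (C2_C1b phz r); auto. }
    rewrite E. apply Rle_trans with (Rabs (RInt (phz r) (-a) z)). apply Rle_abs.
    apply Rle_trans with (RInt (fun t => Rabs (phz r t)) (-a) z).
    apply RInt_abs_le. lra. apply exR_cont. apply (C2_C1b phz r); auto.
    unfold h. apply RInt_sub_le; try lra. apply (C2_C1b (fun r t => Rabs (phz r t)) r). c2f.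
    intros; apply Rabs_pos. }
  set (M := fun z => RInt (fun r => Rabs (phr r z) * r) 0 Rr).
  set (H := RInt (fun r => h r * r) 0 Rr).
  assert (H0 : 0 <= H) by (apply RIntR_ge0; auto; [apply exR_cont; apply C2_Cont1; c2f | intros; apply Rmult_le_pos; auto; lra]).
  assert (S3 : forall z, - a < z < a -> RInt (fun r => W r z ^ 6 * r) 0 Rr <= M z * sqrt H).
  { intros z Hz.
    set (Y := RInt (fun r => Rabs (W r z ^ 4 * sqrt (h r)) * r) 0 Rr).
    assert (Ya : RInt (fun r => W r z ^ 6 * r) 0 Rr <= Y).
    { apply RInt_le; auto. apply exR_cont. apply (C2_C1a (fun r z => W r z ^ 6 * r)); c2f.
      apply exR_cont. apply (C2_C1a (fun r z => Rabs (W r z ^ 4 * sqrt (h r)) * r)); c2f.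
      intros r Hr. assert (K := S1 r z ltac:(lra) ltac:(lra)).
      assert (K2 : W r z ^ 2 <= sqrt (h r)).
      { rewrite <- (sqrt_pow2 (W r z ^ 2)) by (apply pow2_ge_0). apply sqrt_le_1_alt. 
        replace ((W r z ^ 2) ^ 2) with (W r z ^ 4) by ring. auto. }
      assert (0 <= W r z ^ 4) by (replace (W r z ^ 4) with ((W r z ^ 2) ^ 2) by ring; apply pow2_ge_0).
      rewrite Rabs_right by (apply Rle_ge, Rmult_le_pos; auto; apply sqrt_pos).
      replace (W r z ^ 6 * r) with (W r z ^ 4 * (W r z ^ 2) * r) by ring.
      apply Rmult_le_compat_r. lra. apply Rmult_le_compat_l; auto. }
    assert (Yb : Y ^ 2 <= (M z) ^ 2 * H).
    { apply Rle_trans with (RInt (fun r => (W r z ^ 4) ^ 2 * r) 0 Rr * RInt (fun r => sqrt (h r) ^ 2 * r) 0 Rr).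
      apply I_CS; auto. apply (C2_C1a (fun r z => W r z ^ 4)); c2f. apply (C2_C1a (fun r z => sqrt (h r)) 0); c2f.
      rewrite (RInt_ext (fun r => sqrt (h r) ^ 2 * r) (fun r => h r * r)) by (intros; rewrite pow2_sqrt; auto).
      apply Rmult_le_compat_r; auto.
      apply (radial_ineq (fun r => W r z ^ 4) (fun r => phr r z)); auto.
      apply (C2_C1a phr); auto. rewrite BR by lra. simpl; ring. }
    assert (Y0 : 0 <= Y) by (apply RIntR_ge0; auto; [apply exR_cont; apply (C2_C1a (fun r z => Rabs (W r z ^ 4 * sqrt (h r)) * r)); c2f | intros; apply Rmult_le_pos; [apply Rabs_pos|lra]]).
    assert (M0 : 0 <= M z) by (apply RIntR_ge0; auto; [apply exR_cont; apply (C2_C1a (fun r z => Rabs (phr r z) * r)); c2f | intros; apply Rmult_le_pos; [apply Rabs_pos|lra]]).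
    assert (sqrt H * sqrt H = H) by (apply sqrt_sqrt; auto). assert (0 <= sqrt H) by apply sqrt_pos.
    destruct (Rle_lt_dec Y (M z * sqrt H)) as [ok|lt]. lra. exfalso.
    assert (0 <= M z * sqrt H) by (apply Rmult_le_pos; auto).
    assert (K : (M z * sqrt H) * (M z * sqrt H) < Y * Y) by (apply Rmult_le_0_lt_compat; auto).
    replace ((M z * sqrt H) * (M z * sqrt H)) with (M z ^ 2 * (sqrt H * sqrt H)) in K by ring.
    rewrite H1 in K. simpl in Yb. lra. }
  set (B := D Rr a (fun r z => W r z ^ 6 * r)).
  set (G := D Rr a (fun r z => r * (Wr r z ^ 2 + Wz r z ^ 2))).
  set (P := D Rr a (fun r z => Rabs (phr r z) * r)).
  assert (S4 : B <= sqrt H * P).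
  { unfold B, P, D. rewrite <- RIntR_scal by (apply D_ex; c2f).
    apply RInt_le; try lra. apply D_ex; c2f. apply exR_cont; apply C2_Cont1. apply (C2_multf (fun _ _ => sqrt H) (fun z _ => M z)). c2f.
    apply Cont1_C2. intros x; apply D_inner_cont; c2f.
    intros z Hz. rewrite Rmult_comm. apply S3; auto. }
  assert (S5 : H = D Rr a (fun r z => Rabs (phz r z) * r)).
  { rewrite D_fub by c2f. unfold H. apply RInt_ext. intros r _. unfold h.
    rewrite Rmult_comm, <- RIntR_scal. apply RInt_ext; intros; simpl; ring.
    apply (C2_ex_RInt2 (fun r z => Rabs (phz r z))); c2f. }
  assert (G0 : 0 <= G) by (apply D_ge0; auto; [c2f | intros; apply Rmult_le_pos; [lra| nra]]).
  assert (B0 : 0 <= B) by (apply D_ge0; auto; [c2f | intros; apply Rmult_le_pos; [replace (W r z ^ 6) with ((W r z ^ 3) ^ 2) by ring; apply pow2_ge_0 | lra]]).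
  assert (P0 : 0 <= P) by (apply D_ge0; auto; [c2f | intros; apply Rmult_le_pos; [apply Rabs_pos|lra]]).
  assert (S6 : forall X, C2 X -> D Rr a (fun r z => X r z ^ 2 * r) <= G ->
     (D Rr a (fun r z => Rabs (4 * (W r z ^ 3 * X r z)) * r)) * (D Rr a (fun r z => Rabs (4 * (W r z ^ 3 * X r z)) * r)) <= 16 * (B * G)).
  { intros X CX HX.
    rewrite (D_ext Rr a _ (fun r z => 4 * (Rabs (W r z ^ 3 * X r z) * r))) by (auto; intros; rewrite Rabs_mult, (Rabs_right 4) by lra; ring).
    rewrite D_scal by c2f.
    assert (K := D_CS Rr a (fun r z => W r z ^ 3) X HRr Ha ltac:(c2f) CX). cbv beta in K.
    rewrite (D_ext Rr a (fun r z => (W r z ^ 3) ^ 2 * r) (fun r z => W r z ^ 6 * r)) in K by (auto; intros; ring).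
    fold B in K.
    assert (0 <= D Rr a (fun r z => X r z ^ 2 * r)) by (apply D_ge0; auto; [c2f| intros; apply Rmult_le_pos; [apply pow2_ge_0|lra]]).
    assert (B * D Rr a (fun r z => X r z ^ 2 * r) <= B * G) by (apply Rmult_le_compat_l; auto).
    set (Q := D Rr a (fun u v : R => Rabs (W u v ^ 3 * X u v) * u)) in *.
    apply Rle_trans with (16 * (B * D Rr a (fun r z => X r z ^ 2 * r))); [|lra].
    replace (4 * Q * (4 * Q)) with (16 * Q ^ 2) by ring. lra. }
  apply (sob_alg B G P H); auto.
  - apply S6; auto. apply D_le; auto; c2f. intros; nra.
  - rewrite S5. apply S6; auto. apply D_le; auto; c2f. intros; nra.
Qed.
End Sob.

Lemma exp_convex t x y : 0 <= t <= 1 -> exp (t * x + (1 - t) * y) <= t * exp x + (1 - t) * exp y.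
Proof.
  intros Ht. set (m := t * x + (1 - t) * y).
  assert (H1 := exp_ineq1_le (x - m)). assert (H2 := exp_ineq1_le (y - m)).
  assert (E1 : exp (x - m) = exp x / exp m) by (unfold Rminus; rewrite exp_plus, exp_Ropp; field; apply Rgt_not_eq, exp_pos).
  assert (E2 : exp (y - m) = exp y / exp m) by (unfold Rminus; rewrite exp_plus, exp_Ropp; field; apply Rgt_not_eq, exp_pos).
  assert (Hm := exp_pos m).
  assert (1 + (x - m) <= exp x / exp m) by (rewrite <- E1; apply exp_ineq1_le).
  assert (1 + (y - m) <= exp y / exp m) by (rewrite <- E2; apply exp_ineq1_le).
  assert (t * (1 + (x - m)) + (1 - t) * (1 + (y - m)) = 1) by (unfold m; ring).
  assert (t * (exp x / exp m) + (1 - t) * (exp y / exp m) >= 1) by nra.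
  assert (t * exp x + (1 - t) * exp y = exp m * (t * (exp x / exp m) + (1 - t) * (exp y / exp m))) by (field; lra).
  nra.
Qed.

Lemma exp_nln m n : 0 < m -> exp (INR n * ln m) = m ^ n.
Proof. intros Hm. rewrite <- Rpower_pow by auto. reflexivity. Qed.

Lemma young56 a b m : 0 <= a -> 0 <= b -> 0 < m ->
  a * b <= 5 / 6 * rpow a (6 / 5) / m + 1 / 6 * m ^ 5 * b ^ 6.
Proof.
  intros Ha Hb Hm. unfold rpow.
  assert (P5 : 0 <= m ^ 5 * b ^ 6) by (apply Rmult_le_pos; [apply pow_le; lra|apply pow_le; auto]).
  destruct (Rle_dec a 0) as [Ha0|Ha0].
  - replace a with 0 by lra. rewrite Rmult_0_l. assert (0 <= 0 / m) by (unfold Rdiv; lra). nra.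
  - destruct (Req_dec b 0) as [Hb0|Hb0].
    + subst b. rewrite Rmult_0_r. assert (0 <= 5/6 * Rpower a (6/5) / m). { unfold Rpower. apply Rmult_le_pos. assert (0 < exp (6/5 * ln a)) by apply exp_pos. lra. left; apply Rinv_0_lt_compat; auto. } nra.
    + assert (Ha' : 0 < a) by lra. assert (Hb' : 0 < b) by lra.
      set (x := 6 / 5 * ln a - ln m). set (y := INR 5 * ln m + INR 6 * ln b).
      assert (Ex : exp x = Rpower a (6/5) / m).
      { unfold x, Rminus, Rpower. rewrite exp_plus, exp_Ropp, exp_ln by auto. reflexivity. }
      assert (Ey : exp y = m ^ 5 * b ^ 6).
      { unfold y. rewrite exp_plus, !exp_nln by auto. reflexivity. }
      assert (Eab : a * b = exp (5/6 * x + (1 - 5/6) * y)).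
      { replace (5/6 * x + (1 - 5/6) * y) with (ln a + ln b).
        rewrite exp_plus, !exp_ln; auto.
        unfold x, y. simpl INR. field. }
      rewrite Eab. eapply Rle_trans. apply exp_convex; lra.
      rewrite Ex, Ey. right; field. lra.
Qed.

Lemma small_pos_bound X K : 0 <= K -> (forall m, 0 < m -> X <= m ^ 5 * K) -> X <= 0.
Proof.
  intros HK H. destruct (Rle_dec X 0) as [ok|nok]; auto. exfalso.
  set (m := Rmin 1 (X / (2 * (K + 1)))).
  assert (Hm : 0 < m) by (apply Rmin_pos; [lra| apply Rdiv_lt_0_compat; lra]).
  assert (Hm1 : m <= 1) by apply Rmin_l.
  assert (Hm2 : m <= X / (2 * (K + 1))) by apply Rmin_r.
  assert (m ^ 4 <= 1 ^ 4) by (apply pow_incr; lra). rewrite pow1 in H0.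
  assert (m ^ 5 <= m) by (replace (m ^ 5) with (m * m ^ 4) by ring; nra).
  assert (K1 := H m Hm).
  assert (m * (2 * (K + 1)) <= X) by (apply Rmult_le_reg_r with (/ (2 * (K + 1))); [apply Rinv_0_lt_compat; lra|];
     replace (m * (2 * (K + 1)) * / (2 * (K + 1))) with m by (field; lra); exact Hm2).
  nra.
Qed.

Lemma Ffinal X A G N2 nu : 0 < nu -> 0 <= A -> 0 <= G -> 0 <= N2 ->
  (0 < A -> Rpower A (1/6) ^ 10 <= N2) ->
  (forall m, 0 < m -> X <= 5 / 6 * A / m + 1 / 6 * m ^ 5 * (4096 * G ^ 3)) ->
  X <= nu / 4 * G + (5 / 6 + 4096 / 6) ^ 2 / nu * N2.
Proof.
  intros Hnu HA HG HN HAN H.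
  assert (R0 : 0 <= nu / 4 * G + (5 / 6 + 4096 / 6) ^ 2 / nu * N2).
  { apply Rplus_le_le_0_compat. apply Rmult_le_pos; lra. apply Rmult_le_pos; auto. apply Rmult_le_pos. nra. left; apply Rinv_0_lt_compat; auto. }
  destruct (Req_dec A 0) as [A0|A0].
  - apply Rle_trans with 0; auto. apply (small_pos_bound X (1/6 * (4096 * G ^ 3))).
    apply Rmult_le_pos; [lra| apply Rmult_le_pos; [lra| apply pow_le; auto]].
    intros m Hm. assert (K := H m Hm). rewrite A0 in K. unfold Rdiv in K. rewrite Rmult_0_r, Rmult_0_l, Rplus_0_l in K. lra.
  - destruct (Req_dec G 0) as [G0|G0].
    + apply Rle_trans with 0; auto. destruct (Rle_dec X 0) as [ok|nok]; auto. exfalso.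
      assert (K := H ((A + 1) / X) ltac:(apply Rdiv_lt_0_compat; lra)). rewrite G0 in K.
      replace (5 / 6 * A / ((A + 1) / X)) with (5 / 6 * A * X / (A + 1)) in K by (field; lra).
      simpl in K. rewrite !Rmult_0_l, !Rmult_0_r, Rplus_0_r in K.
      assert (5 / 6 * A * X / (A + 1) < X).
      { apply Rmult_lt_reg_r with (A + 1). lra. replace (5 / 6 * A * X / (A + 1) * (A + 1)) with (5/6 * A * X) by (field; lra). nra. }
      lra.
    + assert (HA' : 0 < A) by lra. assert (HG' : 0 < G) by lra.
      set (p := Rpower A (1/6)). set (q := sqrt G).
      assert (Hp : 0 < p) by (unfold p, Rpower; apply exp_pos).
      assert (Hq : 0 < q) by (apply sqrt_lt_R0; auto).
      assert (Ep : A = p ^ 6).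
      { unfold p. rewrite <- Rpower_pow by (unfold Rpower; apply exp_pos). rewrite Rpower_mult.
        replace (1 / 6 * INR 6) with 1 by (simpl; field). rewrite Rpower_1; auto. }
      assert (Eq : G = q ^ 2) by (unfold q; rewrite pow2_sqrt; lra).
      assert (K := H (p / q) ltac:(apply Rdiv_lt_0_compat; auto)).
      set (k := 5 / 6 + 4096 / 6) in *.
      assert (K2 : X <= k * p ^ 5 * q).
      { eapply Rle_trans. apply K. rewrite Ep, Eq. right. unfold k. field. lra. }
      assert (K3 : k * p ^ 5 * q <= nu / 4 * q ^ 2 + k ^ 2 / nu * p ^ 10).
      { assert (0 <= (nu * q / 2 - k * p ^ 5) ^ 2) by apply pow2_ge_0.
        apply Rmult_le_reg_l with nu; auto.
        replace (nu * (nu / 4 * q ^ 2 + k ^ 2 / nu * p ^ 10)) with (nu * nu / 4 * q ^ 2 + k ^ 2 * p ^ 10) by (field; lra).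
        nra. }
      assert (K4 := HAN HA'). fold p in K4.
      assert (k ^ 2 / nu * p ^ 10 <= k ^ 2 / nu * N2).
      { apply Rmult_le_compat_l; auto. apply Rmult_le_pos. apply pow2_ge_0. left; apply Rinv_0_lt_compat; auto. }
      rewrite <- Eq in K3. lra.
Qed.

Lemma rpow_cont p x : 0 < p -> continuity_pt (fun x => rpow x p) x.
Proof.
  intros Hp. apply continuity_pt_filterlim.
  destruct (Rlt_dec 0 x) as [Hx|Hx].
  - apply (continuous_ext_loc (fun y => rpow y p) (fun y => exp (p * ln y)) x).
    apply (locally_interval _ x 0 p_infty); simpl; auto.
    intros y Hy _. unfold rpow. destruct (Rle_dec y 0); [lra|]. reflexivity.
    apply (continuous_comp ln (fun u => exp (p * u))). apply continuous_ln; auto.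
    apply (continuous_comp (fun u => p * u) exp). apply (continuous_scal_r (K:=R_AbsRing) (V:=R_NormedModule) p (fun u => u)). apply continuous_id.
    apply continuous_exp.
  - destruct (Rlt_dec x 0) as [Hx'|Hx'].
    + apply (continuous_ext_loc (fun y => rpow y p) (fun _ => 0) x).
      apply (locally_interval _ x m_infty 0); simpl; auto.
      intros y _ Hy. unfold rpow. destruct (Rle_dec y 0); [|lra]. destruct (Rle_dec x 0); [|lra]. reflexivity.
      apply continuous_const.
    + assert (x = 0) by lra. subst x. apply (proj1 (continuity_pt_filterlim (fun x => rpow x p) 0)).
      intros eps Heps. exists (exp (ln eps / p)). split. apply exp_pos.
      intros y [_ Hy]. unfold R_dist in Hy |- *. unfold rpow. destruct (Rle_dec 0 0); [|lra].
      destruct (Rle_dec y 0). simpl; unfold R_dist; rewrite Rminus_eq_0, Rabs_R0; auto.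
      simpl; unfold R_dist; rewrite Rminus_0_r, Rabs_right by (unfold Rpower; apply Rle_ge, Rlt_le, exp_pos).
      simpl in Hy; unfold R_dist in Hy; rewrite Rminus_0_r, Rabs_right in Hy by lra.
      unfold Rpower. rewrite <- (exp_ln eps) by auto. apply exp_increasing.
      assert (ln y < ln eps / p) by (rewrite <- (ln_exp (ln eps / p)); apply ln_increasing; lra).
      apply Rmult_lt_reg_r with (/ p). apply Rinv_0_lt_compat; auto.
      replace (p * ln y * / p) with (ln y) by (field; lra). exact H.
Qed.

Lemma rpow_ge0 x p : 0 <= rpow x p.
Proof. unfold rpow. destruct (Rle_dec x 0). lra. unfold Rpower; apply Rlt_le, exp_pos. Qed.

Lemma D_dr Rr a P Q : (forall r z, is_derive (fun r => P r z) r (Q r z)) -> C2 Q ->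
  D Rr a Q = RInt (fun z => P Rr z - P 0 z) (-a) a.
Proof.
  intros H CQ. unfold D. apply RInt_ext. intros z _. apply (FTC1 (fun r => P r z) (fun r => Q r z)); auto.
  apply C2_C1a; auto.
Qed.
Lemma D_dz Rr a P Q : (forall r z, is_derive (fun z => P r z) z (Q r z)) -> C2 Q ->
  D Rr a Q = RInt (fun r => P r a - P r (-a)) 0 Rr.
Proof.
  intros H CQ. rewrite D_fub by auto. apply RInt_ext. intros r _. apply (FTC1 (fun z => P r z) (fun z => Q r z)); auto.
  apply C2_C1b; auto.
Qed.
Lemma D_minus Rr a f g : C2 f -> C2 g -> D Rr a (fun u v => f u v - g u v) = D Rr a f - D Rr a g.
Proof.
  intros Hf Hg. unfold D. rewrite <- RIntR_minus by (apply D_ex; auto).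
  apply RInt_ext. intros z _. apply RIntR_minus; apply C2_ex_RInt1; auto.
Qed.



Ltac rring := match goal with |- ?x = ?y => change (@eq R x y) end; ring.

Section Energy.
Variables (Rr a nu : R) (w wr wz wrr wzz ws vr vrr vz vzz u uz F : R -> R -> R).
Hypotheses (HRr : 0 < Rr) (Ha : 0 < a)
  (Dwr : forall r z, is_derive (fun r => w r z) r (wr r z))
  (Dwz : forall r z, is_derive (fun z => w r z) z (wz r z))
  (Dwrr : forall r z, is_derive (fun r => wr r z) r (wrr r z))
  (Dwzz : forall r z, is_derive (fun z => wz r z) z (wzz r z))
  (Dvr : forall r z, is_derive (fun r => vr r z) r (vrr r z))
  (Dvz : forall r z, is_derive (fun z => vz r z) z (vzz r z))
  (Du : forall r z, is_derive (fun z => u r z) z (uz r z))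
  (Cw : C2 w) (Cwr : C2 wr) (Cwz : C2 wz) (Cwrr : C2 wrr) (Cwzz : C2 wzz) (Cws : C2 ws)
  (Cvr : C2 vr) (Cvrr : C2 vrr) (Cvz : C2 vz) (Cvzz : C2 vzz) (Cu : C2 u) (Cuz : C2 uz) (CF : C2 F)
  (Hdiv : forall r z, 0 < r < Rr -> - a < z < a -> vrr r z + vr r z / r + vzz r z = 0)
  (Heq : forall r z, 0 < r < Rr -> - a < z < a ->
       ws r z + (vr r z * wr r z + vz r z * wz r z)
       - nu * (wrr r z + / r * wr r z + wzz r z + 2 / r * wr r z)
       = 2 * u r z * uz r z + F r z)
  (BR : forall z, - a <= z <= a -> w Rr z = 0)
  (Bz : forall r, 0 <= r <= Rr -> w r a = 0 /\ w r (- a) = 0).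

Ltac dtac := repeat (match goal with
  | |- is_derive (fun x => @?f x * @?g x) _ _ => apply (dmult f g)
  | |- is_derive (fun x => @?f x + @?g x) _ _ => apply (dplus f g)
  | |- is_derive (fun x => x) _ _ => apply did
  | |- is_derive (fun _ => ?c) _ _ => apply dconst
  | |- is_derive (fun x => w x ?z) _ _ => apply Dwr
  | |- is_derive (fun x => wr x ?z) _ _ => apply Dwrr
  | |- is_derive (fun x => vr x ?z) _ _ => apply Dvr
  | |- is_derive (fun x => w ?r x) _ _ => apply Dwz
  | |- is_derive (fun x => wz ?r x) _ _ => apply Dwzz
  | |- is_derive (fun x => vz ?r x) _ _ => apply Dvz
  | |- is_derive (fun x => u ?r x) _ _ => apply Du
  end).

Ltac c2 := repeat (match goal with
 | |- C2 (fun u v => @?f u v + @?g u v) => apply (C2_plusf f g)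
 | |- C2 (fun u v => @?f u v - @?g u v) => apply (C2_minusf f g)
 | |- C2 (fun u v => @?f u v * @?g u v) => apply (C2_multf f g)
 | |- C2 (fun u v => Rabs (@?f u v)) => apply (C2_abs f)
 | |- C2 (fun u v => sqrt (@?f u v)) => apply (C2_sqrt f)
 | |- C2 (fun u v => (@?f u v) ^ ?n) => apply (C2_pow f n)
 | |- C2 (fun _ _ => ?c) => apply C2_const
 | |- C2 (fun u _ => u) => apply C2_id1
 | |- C2 (fun _ v => v) => apply C2_id2
 | |- _ => assumption
 end).

Lemma zero_R (P : R -> R -> R) : (forall z, - a < z < a -> P Rr z = 0 /\ P 0 z = 0) ->
  RInt (fun z => P Rr z - P 0 z) (-a) a = 0.
Proof.
  intros H. rewrite (RInt_ext _ (fun _ => 0)). rewrite RIntR_const; simpl; ring.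
  intros z Hz. rewrite Rmin_left in Hz by lra. rewrite Rmax_right in Hz by lra. destruct (H z Hz) as [-> ->]; simpl; ring.
Qed.
Lemma zero_Z (P : R -> R -> R) : (forall r, 0 < r < Rr -> P r a = 0 /\ P r (-a) = 0) ->
  RInt (fun r => P r a - P r (-a)) 0 Rr = 0.
Proof.
  intros H. rewrite (RInt_ext _ (fun _ => 0)). rewrite RIntR_const; simpl; ring.
  intros r Hr. rewrite Rmin_left in Hr by lra. rewrite Rmax_right in Hr by lra. destruct (H r Hr) as [-> ->]; simpl; ring.
Qed.

Definition Zs := RInt (fun z => w 0 z ^ 2) (-a) a.

Lemma T12 : D Rr a (fun r z => vr r z * wr r z * w r z * r) + D Rr a (fun r z => vz r z * wz r z * w r z * r) = 0.
Proof.
  assert (K1 : D Rr a (fun r z => (vr r z + r * vrr r z) * (w r z * w r z) + 2 * (vr r z * wr r z * w r z * r)) = 0).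
  { rewrite (D_dr Rr a (fun r z => r * vr r z * (w r z * w r z))).
    apply (zero_R (fun r z => r * vr r z * (w r z * w r z))). intros z Hz. rewrite BR by lra. split; ring.
    intros r z. eapply deq. dtac. simpl; ring. c2. }
  assert (K2 : D Rr a (fun r z => r * vzz r z * (w r z * w r z) + 2 * (vz r z * wz r z * w r z * r)) = 0).
  { rewrite (D_dz Rr a (fun r z => r * vz r z * (w r z * w r z))).
    apply (zero_Z (fun r z => r * vz r z * (w r z * w r z))). intros r Hr. destruct (Bz r ltac:(lra)) as [-> ->]. split; ring.
    intros r z. eapply deq. dtac. simpl; ring. c2. }
  assert (K3 : D Rr a (fun r z => (vr r z + r * vrr r z) * (w r z * w r z) + 2 * (vr r z * wr r z * w r z * r)
      + (r * vzz r z * (w r z * w r z) + 2 * (vz r z * wz r z * w r z * r))) =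
      D Rr a (fun r z => 2 * (vr r z * wr r z * w r z * r + vz r z * wz r z * w r z * r))).
  { apply D_ext; try lra. intros r z Hr Hz. assert (Hd := Hdiv r z Hr Hz).
    assert (E : vr r z + r * vrr r z + r * vzz r z = 0).
    { replace (vr r z + r * vrr r z + r * vzz r z) with (r * (vrr r z + vr r z / r + vzz r z)) by (field; lra). rewrite Hd; ring. }
    replace (r * vzz r z) with (- vr r z - r * vrr r z) by lra. ring. }
  rewrite D_plus in K3 by c2. rewrite K1, K2, D_scal, D_plus in K3 by c2. lra.
Qed.

Lemma T3 : D Rr a (fun r z => (r * wrr r z + wr r z) * w r z) = - D Rr a (fun r z => r * wr r z ^ 2).
Proof.
  assert (K : D Rr a (fun r z => (r * wrr r z + wr r z) * w r z + r * wr r z ^ 2) = 0).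
  { rewrite (D_dr Rr a (fun r z => r * wr r z * w r z)).
    apply (zero_R (fun r z => r * wr r z * w r z)). intros z Hz. rewrite BR by lra. split; ring.
    intros r z. eapply deq. dtac. simpl; ring. c2. }
  rewrite D_plus in K by c2. lra.
Qed.

Lemma T4 : D Rr a (fun r z => r * wzz r z * w r z) = - D Rr a (fun r z => r * wz r z ^ 2).
Proof.
  assert (K : D Rr a (fun r z => r * wzz r z * w r z + r * wz r z ^ 2) = 0).
  { rewrite (D_dz Rr a (fun r z => r * wz r z * w r z)).
    apply (zero_Z (fun r z => r * wz r z * w r z)). intros r Hr. destruct (Bz r ltac:(lra)) as [-> ->]. split; ring.
    intros r z. eapply deq. dtac. simpl; ring. c2. }
  rewrite D_plus in K by c2. lra.
Qed.

Lemma T5 : 2 * D Rr a (fun r z => wr r z * w r z) = - Zs.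
Proof.
  rewrite <- D_scal by c2.
  rewrite (D_dr Rr a (fun r z => w r z * w r z)).
  unfold Zs. rewrite (RInt_ext _ (fun z => -1 * w 0 z ^ 2)). rewrite RIntR_scal. simpl; ring.
  apply exR_cont. apply (C2_C1b (fun r z => w r z ^ 2)); c2.
  intros z Hz. rewrite Rmin_left in Hz by lra. rewrite Rmax_right in Hz by lra. rewrite BR by lra. simpl; ring.
  intros r z. eapply deq. dtac. simpl; ring. c2.
Qed.

Lemma T6 : 2 * D Rr a (fun r z => u r z * uz r z * w r z * r) = - D Rr a (fun r z => u r z ^ 2 * wz r z * r).
Proof.
  assert (K : D Rr a (fun r z => 2 * (u r z * uz r z * w r z * r) + u r z ^ 2 * wz r z * r) = 0).
  { rewrite (D_dz Rr a (fun r z => r * (u r z * u r z) * w r z)).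
    apply (zero_Z (fun r z => r * (u r z * u r z) * w r z)). intros r Hr. destruct (Bz r ltac:(lra)) as [-> ->]. split; ring.
    intros r z. eapply deq. dtac. simpl; ring. c2. }
  rewrite D_plus, D_scal in K by c2. lra.
Qed.

Lemma energy_identity :
  D Rr a (fun r z => w r z * ws r z * r) =
  nu * (- D Rr a (fun r z => r * wr r z ^ 2) - D Rr a (fun r z => r * wz r z ^ 2) - Zs)
  - D Rr a (fun r z => u r z ^ 2 * wz r z * r) + D Rr a (fun r z => F r z * w r z * r).
Proof.
  rewrite (D_ext Rr a _ (fun r z =>
     -1 * (vr r z * wr r z * w r z * r + vz r z * wz r z * w r z * r)
     + nu * ((r * wrr r z + wr r z) * w r z + r * wzz r z * w r z + 2 * (wr r z * w r z))
     + 2 * (u r z * uz r z * w r z * r) + F r z * w r z * r)); try lra.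
  - rewrite !D_plus, !D_scal, !D_plus, D_scal by c2.
    rewrite T12, T3, T4.
    assert (K5 := T5). assert (K6 := T6).
    replace Zs with (-(2 * D Rr a (fun r z => wr r z * w r z))) by lra.
    replace (D Rr a (fun r z => u r z ^ 2 * wz r z * r)) with (-(2 * D Rr a (fun r z => u r z * uz r z * w r z * r))) by lra.
    match goal with |- ?x = ?y => change (@eq R x y) end. ring.
  - intros r z Hr Hz. assert (E := Heq r z Hr Hz).
    replace (ws r z) with (2 * u r z * uz r z + F r z - (vr r z * wr r z + vz r z * wz r z)
       + nu * (wrr r z + / r * wr r z + wzz r z + 2 / r * wr r z)) by lra.
    field. lra.
Qed.

Lemma slice_ineq : 0 < nu ->
  PI * D Rr a (fun r z => 2 * (w r z * ws r z) * r)
  + nu / 2 * (2 * PI * D Rr a (fun r z => (wr r z ^ 2 + wz r z ^ 2) * r))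
  + nu * Zs
  <= 1 / nu * (2 * PI * D Rr a (fun r z => u r z ^ 4 * r))
  + (2 * PI * ((5/6 + 4096/6) ^ 2 / nu)) * (rpow (2 * PI * D Rr a (fun r z => rpow (Rabs (F r z)) (6/5) * r)) (1 / (6/5))) ^ 2.
Proof.
  intros Hnu.
  assert (CrF : C2 (fun r z => rpow (Rabs (F r z)) (6/5))).
  { apply (C2_comp1 (fun x => rpow x (6/5)) (fun r z => Rabs (F r z))). intros; apply rpow_cont; lra. c2. }
  set (G := D Rr a (fun r z => r * (wr r z ^ 2 + wz r z ^ 2))).
  set (Gr := D Rr a (fun r z => r * wr r z ^ 2)).
  set (Gz := D Rr a (fun r z => r * wz r z ^ 2)).
  set (U := D Rr a (fun r z => u r z ^ 4 * r)).
  set (X := D Rr a (fun r z => F r z * w r z * r)).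
  set (A := D Rr a (fun r z => rpow (Rabs (F r z)) (6/5) * r)).
  set (N2 := (rpow (2 * PI * A) (1 / (6/5))) ^ 2).
  set (k := 5/6 + 4096/6).
  assert (EG : G = Gr + Gz).
  { unfold G, Gr, Gz. rewrite <- D_plus by c2. apply D_ext; try lra. intros; ring. }
  assert (EG2 : D Rr a (fun r z => (wr r z ^ 2 + wz r z ^ 2) * r) = G).
  { apply D_ext; try lra. intros; ring. }
  assert (E2 : D Rr a (fun r z => 2 * (w r z * ws r z) * r) = 2 * D Rr a (fun r z => w r z * ws r z * r)).
  { rewrite <- D_scal by c2. apply D_ext; try lra. intros; ring. }
  assert (EI := energy_identity). fold Gr Gz X in EI.
  assert (Gz0 : 0 <= Gz) by (apply D_ge0; try lra; [c2| intros; apply Rmult_le_pos; [lra|apply pow2_ge_0]]).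
  assert (Gr0 : 0 <= Gr) by (apply D_ge0; try lra; [c2| intros; apply Rmult_le_pos; [lra|apply pow2_ge_0]]).
  assert (U0 : 0 <= U) by (apply D_ge0; try lra; [c2| intros; apply Rmult_le_pos; [replace (u r z ^ 4) with ((u r z ^ 2) ^ 2) by ring; apply pow2_ge_0|lra]]).
  assert (Z0 : 0 <= Zs) by (apply RIntR_ge0; [lra| apply exR_cont; apply (C2_C1b (fun r z => w r z ^ 2)); c2| intros; apply pow2_ge_0]).
  assert (B1 : - D Rr a (fun r z => u r z ^ 2 * wz r z * r) <= nu / 4 * Gz + 1 / nu * U).
  { unfold Gz, U. rewrite <- !D_scal by c2. rewrite <- D_plus by c2.
    replace (- D Rr a (fun r z => u r z ^ 2 * wz r z * r)) with (D Rr a (fun r z => -1 * (u r z ^ 2 * wz r z * r))) by (rewrite D_scal by c2; rring).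
    apply D_le; try lra; try c2. intros r z Hr Hz.
    assert (0 <= (nu * wz r z / 2 + u r z ^ 2) ^ 2) by apply pow2_ge_0.
    assert (K : 0 <= r * (nu * wz r z / 2 + u r z ^ 2) ^ 2) by (apply Rmult_le_pos; lra).
    apply Rmult_le_reg_l with nu; auto.
    replace (nu * (nu / 4 * (r * wz r z ^ 2) + 1 / nu * (u r z ^ 4 * r))) with (nu * nu / 4 * (r * wz r z ^ 2) + u r z ^ 4 * r) by (field; lra).
    nra. }
  assert (Sob := sobolev Rr a w wr wz ltac:(lra) ltac:(lra) Dwr Dwz Cw Cwr Cwz BR Bz). fold G in Sob.
  assert (G0 : 0 <= G) by lra.
  assert (A0 : 0 <= A) by (apply D_ge0; try lra; [c2| intros; apply Rmult_le_pos; [apply rpow_ge0|lra]]).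
  assert (N20 : 0 <= N2) by apply pow2_ge_0.
  assert (B2 : X <= nu / 4 * G + k ^ 2 / nu * N2).
  { apply (Ffinal X A G N2 nu); auto.
    - intros HA. unfold N2. unfold rpow. destruct (Rle_dec (2 * PI * A) 0) as [E|E].
      exfalso. assert (0 < 2 * PI * A) by (assert (PI > 0) by apply PI_RGT_0; nra). lra.
      replace (1 / (6/5)) with (5/6) by field.
      rewrite <- Rpower_mult_distr by (try assert (PI > 0) by apply PI_RGT_0; lra).
      assert (P1 : 1 <= Rpower (2 * PI) (5/6)).
      { rewrite <- (Rpower_O (2 * PI)) by (assert (PI > 0) by apply PI_RGT_0; lra).
        apply Rle_Rpower; [assert (PI/2 > 1) by apply PI2_1; lra | lra]. }
      assert (P2 : Rpower A (5/6) = Rpower A (1/6) ^ 5).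
      { rewrite <- Rpower_pow by (unfold Rpower; apply exp_pos). rewrite Rpower_mult. f_equal. simpl; field. }
      assert (P3 : 0 < Rpower A (5/6)) by (unfold Rpower; apply exp_pos).
      replace (Rpower A (1/6) ^ 10) with ((Rpower A (5/6)) ^ 2) by (rewrite P2; ring).
      apply pow_incr. split. lra. rewrite <- (Rmult_1_l (Rpower A (5/6))) at 1. apply Rmult_le_compat_r; lra.
    - intros m Hm. apply Rle_trans with (5 / 6 * A / m + 1 / 6 * m ^ 5 * D Rr a (fun r z => w r z ^ 6 * r)).
      + unfold X, A. unfold Rdiv at 1. rewrite (Rmult_comm (5/6 * _)), <- Rmult_assoc.
        rewrite <- !D_scal by c2. rewrite <- D_plus by c2. apply D_le; try lra; try c2.
        intros r z Hr Hz. apply Rle_trans with (Rabs (F r z) * Rabs (w r z) * r).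
        rewrite <- Rabs_mult. apply Rmult_le_compat_r; [lra|apply Rle_abs].
        assert (Y := young56 (Rabs (F r z)) (Rabs (w r z)) m (Rabs_pos _) (Rabs_pos _) Hm).
        replace (Rabs (w r z) ^ 6) with (w r z ^ 6) in Y by (replace 6%nat with (2*3)%nat by reflexivity; rewrite !pow_mult, pow2_abs; reflexivity).
        apply Rle_trans with ((5 / 6 * rpow (Rabs (F r z)) (6 / 5) / m + 1 / 6 * m ^ 5 * w r z ^ 6) * r).
        apply Rmult_le_compat_r; lra. right. field. lra.
      + assert (0 <= 1/6 * m ^ 5) by (apply Rmult_le_pos; [lra| apply pow_le; lra]). nra. }
  assert (PI > 0) by apply PI_RGT_0.
  rewrite E2, EG2, EI. fold U N2 A k.
  assert (PI * (2 * (nu * (- Gr - Gz - Zs) - D Rr a (fun r z => u r z ^ 2 * wz r z * r) + X))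
     <= PI * (2 * (nu * (- Gr - Gz - Zs) + nu / 4 * Gz + 1 / nu * U + nu / 4 * G + k ^ 2 / nu * N2))).
  { apply Rmult_le_compat_l. lra. lra. }
  assert (nu * Zs <= 2 * PI * (nu * Zs)) by (assert (0 <= nu * Zs) by nra; assert (PI/2 > 1) by apply PI2_1; nra).
  rewrite EG in *.
  assert (EE : 2 * PI * (k ^ 2 / nu) * N2 = 2 * PI * (k ^ 2 / nu * N2)) by ring.
  assert (EU : 1 / nu * (2 * PI * U) = 2 * PI * (1 / nu * U)) by (field; lra).
  rewrite EE, EU. 
  assert (0 <= PI * (nu * Gz)) by (apply Rmult_le_pos; nra).
  assert (0 <= PI * (nu * Gr)) by (apply Rmult_le_pos; nra).
  lra.
Qed.
End Energy.

Lemma cont3_sl_z f z : cont3 f -> C2 (fun s r => f r z s).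
Proof.
  intros H x y eps. destruct (H y z x eps (cond_pos eps)) as [d [Hd H']].
  exists (mkposreal d Hd); simpl; intros u v H1 H2. apply H'; auto. rewrite Rminus_eq_0, Rabs_R0; auto.
Qed.
Lemma cont3_sl_r f r : cont3 f -> C2 (fun s z => f r z s).
Proof.
  intros H x y eps. destruct (H r y x eps (cond_pos eps)) as [d [Hd H']].
  exists (mkposreal d Hd); simpl; intros u v H1 H2. apply H'; auto. rewrite Rminus_eq_0, Rabs_R0; auto.
Qed.

Lemma D_cont_s Rr a g : cont3 g -> Cont1 (fun s => D Rr a (fun r z => g r z s)).
Proof.
  intros Hg s. unfold D.
  apply (param1 (fun s z => RInt (fun r => g r z s) 0 Rr) (-a) a).
  apply (C2_swap (fun z s => RInt (fun r => g r z s) 0 Rr)). apply param2; auto.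
Qed.

Lemma D_deriv_s Rr a g gs : cont3 g -> cont3 gs -> (forall r z s, is_derive (fun s => g r z s) s (gs r z s)) ->
  forall s, is_derive (fun s => D Rr a (fun r z => g r z s)) s (D Rr a (fun r z => gs r z s)).
Proof.
  intros Cg Cgs Hd s.
  assert (Kd : forall u z, is_derive (fun u => RInt (fun r => g r z u) 0 Rr) u (RInt (fun r => gs r z u) 0 Rr)).
  { intros u z.
    assert (H := is_derive_RInt_param (fun u r => g r z u) 0 Rr u).
    rewrite (RInt_ext (fun t => Derive (fun u0 => g t z u0) u) (fun r => gs r z u)) in H.
    apply H.
    - apply filter_forall. intros y t _. eexists. apply Hd.
    - intros t _. apply continuity_2d_pt_ext with (fun u v => gs v z u).
      intros x y. symmetry. apply is_derive_unique. apply Hd.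
      apply (cont3_sl_z gs z Cgs).
    - apply filter_forall. intros y. apply (C2_ex_RInt1 (fun r z => g r z y)). apply cont3_slice; auto.
    - intros t _. apply is_derive_unique. apply Hd. }
  unfold D.
  assert (H := is_derive_RInt_param (fun u z => RInt (fun r => g r z u) 0 Rr) (-a) a s).
  rewrite (RInt_ext (fun t => Derive (fun u0 => RInt (fun r => g r t u0) 0 Rr) s) (fun z => RInt (fun r => gs r z s) 0 Rr)) in H.
  apply H.
  - apply filter_forall. intros y t _. eexists. apply Kd.
  - intros t _. apply continuity_2d_pt_ext with (fun u v => RInt (fun r => gs r v u) 0 Rr).
    intros x y. symmetry. apply is_derive_unique. apply Kd.
    apply (C2_swap (fun z s => RInt (fun r => gs r z s) 0 Rr)). apply param2; auto.
  - apply filter_forall. intros y. apply exR_cont. apply (D_inner_cont (fun r z => g r z y)). apply cont3_slice; auto.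
  - intros t _. apply is_derive_unique. apply Kd.
Qed.

Lemma cont3_pow f n : cont3 f -> cont3 (fun r z s => f r z s ^ n).
Proof. apply (cont3_comp1 (fun x => x ^ n)). intros; apply derivable_continuous_pt, derivable_pt_pow. Qed.
Lemma cont3_abs f : cont3 f -> cont3 (fun r z s => Rabs (f r z s)).
Proof. apply (cont3_comp1 Rabs). intros; apply Rcontinuity_abs. Qed.
Lemma cont3_rpow f p : 0 < p -> cont3 f -> cont3 (fun r z s => rpow (f r z s) p).
Proof. intros Hp. apply (cont3_comp1 (fun x => rpow x p)). intros; apply rpow_cont; auto. Qed.

Ltac c3 := repeat (match goal with
 | |- cont3 (fun r z s => @?f r z s + @?g r z s) => apply (cont3_plus f g)
 | |- cont3 (fun r z s => @?f r z s * @?g r z s) => apply (cont3_mult f g)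
 | |- cont3 (fun r z s => (@?f r z s) ^ ?n) => apply (cont3_pow f n)
 | |- cont3 (fun r z s => Rabs (@?f r z s)) => apply (cont3_abs f)
 | |- cont3 (fun r z s => rpow (@?f r z s) ?p) => apply (cont3_rpow f p); [lra|]
 | |- cont3 (fun _ _ _ => ?c) => apply cont3_const
 | |- cont3 (fun r _ _ => r) => apply cont3_r
 | |- _ => assumption
 end).

Lemma C2_pt_const1 (f : R -> R) : Cont1 f -> C2 (fun x _ => f x).
Proof. apply Cont1_C2. Qed.

Ltac c2k := repeat (match goal with
 | |- C2 (fun u v => @?f u v + @?g u v) => apply (C2_plusf f g)
 | |- C2 (fun u v => @?f u v - @?g u v) => apply (C2_minusf f g)
 | |- C2 (fun u v => @?f u v * @?g u v) => apply (C2_multf f g)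
 | |- C2 (fun u v => (@?f u v) ^ ?n) => apply (C2_pow f n)
 | |- C2 (fun _ _ => ?c) => apply C2_const
 | |- C2 (fun u _ => u) => apply C2_id1
 | |- C2 (fun _ v => v) => apply C2_id2
 | |- _ => assumption
 end).

Theorem lemma3p1 (Rr a nu : R) (HRr : 0 < Rr) (Ha : 0 < a) (Hnu : 0 < nu) :
  exists c : R, 0 < c /\
  forall (T t : R) (vr vz u1 w1 F1 : field3),
    0 <= t <= T ->
    C1_3 vr -> C1_3 vz -> C1_3 u1 -> reg2 w1 -> cont3 F1 ->
    (forall r z s, 0 < r < Rr -> - a < z < a -> 0 < s < t ->
       d_r vr r z s + vr r z s / r + d_z vz r z s = 0) ->
    (forall z s, - a <= z <= a -> 0 < s < t -> vr Rr z s = 0) ->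
    (forall r s, 0 <= r <= Rr -> 0 < s < t -> vz r a s = 0 /\ vz r (- a) s = 0) ->
    (forall r z s, 0 < r < Rr -> - a < z < a -> 0 < s < t ->
       d_s w1 r z s + (vr r z s * d_r w1 r z s + vz r z s * d_z w1 r z s)
       - nu * (d_r (d_r w1) r z s + / r * d_r w1 r z s + d_z (d_z w1) r z s
               + 2 / r * d_r w1 r z s)
       = 2 * u1 r z s * d_z u1 r z s + F1 r z s) ->
    (forall z s, - a <= z <= a -> 0 < s < t -> w1 Rr z s = 0) ->
    (forall r s, 0 <= r <= Rr -> 0 < s < t -> w1 r a s = 0 /\ w1 r (- a) s = 0) ->
    1 / 2 * int_Omega Rr a (fun r z => (w1 r z t) ^ 2)
    + nu / 2 * int_Omega_t Rr a t
        (fun r z s => (d_r w1 r z s) ^ 2 + (d_z w1 r z s) ^ 2)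
    + nu * RInt (fun s => RInt (fun z => (w1 0 z s) ^ 2) (- a) a) 0 t
    <= 1 / nu * int_Omega_t Rr a t (fun r z s => (u1 r z s) ^ 4)
       + c * (L2Lp_Omega_t Rr a (6 / 5) t F1) ^ 2
       + int_Omega Rr a (fun r z => (w1 r z 0) ^ 2).
Proof.
  assert (HPI : PI > 0) by apply PI_RGT_0.
  set (k := 5/6 + 4096/6).
  exists (2 * PI * (k ^ 2 / nu)). split.
  { apply Rmult_lt_0_compat. lra. apply Rdiv_lt_0_compat; auto. unfold k; nra. }
  intros T t vr vz u1 w1 F1 Ht Cvr Cvz Cu Rw CF Hdiv Bvr Bvz Heq BR Bz.
  destruct Cvr as [cvr [exvr [ezvr [esvr [cdrvr [cdzvr cdsvr]]]]]].
  destruct Cvz as [cvz [exvz [ezvz [esvz [cdrvz [cdzvz cdsvz]]]]]].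
  destruct Cu as [cu [exu [ezu [esu [cdru [cdzu cdsu]]]]]].
  destruct Rw as [[cw [exw [ezw [esw [cdrw [cdzw cdsw]]]]]] [exrrw [ezzw [cdrrw cdzzw]]]].
  set (sG := fun s => int_Omega Rr a (fun r z => d_r w1 r z s ^ 2 + d_z w1 r z s ^ 2)).
  set (sU := fun s => int_Omega Rr a (fun r z => u1 r z s ^ 4)).
  set (sZ := fun s => RInt (fun z => w1 0 z s ^ 2) (-a) a).
  set (sN := fun s => Lp_Omega Rr a (6 / 5) (fun r z => F1 r z s) ^ 2).
  set (E := fun s => D Rr a (fun r z => w1 r z s ^ 2 * r)).
  set (Ed := fun s => D Rr a (fun r z => 2 * (w1 r z s * d_s w1 r z s) * r)).
  assert (SL : forall s, 0 < s < t -> PI * Ed s + nu / 2 * sG s + nu * sZ s <= 1 / nu * sU s + 2 * PI * (k ^ 2 / nu) * sN s).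
  { intros s Hs.
    exact (slice_ineq Rr a nu (fun r z => w1 r z s) (fun r z => d_r w1 r z s) (fun r z => d_z w1 r z s)
      (fun r z => d_r (d_r w1) r z s) (fun r z => d_z (d_z w1) r z s) (fun r z => d_s w1 r z s)
      (fun r z => vr r z s) (fun r z => d_r vr r z s) (fun r z => vz r z s) (fun r z => d_z vz r z s)
      (fun r z => u1 r z s) (fun r z => d_z u1 r z s) (fun r z => F1 r z s) HRr Ha
      (fun r z => Derive_correct _ _ (exw r z s)) (fun r z => Derive_correct _ _ (ezw r z s))
      (fun r z => Derive_correct _ _ (exrrw r z s)) (fun r z => Derive_correct _ _ (ezzw r z s))
      (fun r z => Derive_correct _ _ (exvr r z s)) (fun r z => Derive_correct _ _ (ezvz r z s))
      (fun r z => Derive_correct _ _ (ezu r z s))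
      (cont3_slice _ s cw) (cont3_slice _ s cdrw) (cont3_slice _ s cdzw) (cont3_slice _ s cdrrw) (cont3_slice _ s cdzzw)
      (cont3_slice _ s cdsw) (cont3_slice _ s cvr) (cont3_slice _ s cdrvr) (cont3_slice _ s cvz) (cont3_slice _ s cdzvz)
      (cont3_slice _ s cu) (cont3_slice _ s cdzu) (cont3_slice _ s CF)
      (fun r z Hr Hz => Hdiv r z s Hr Hz Hs) (fun r z Hr Hz => Heq r z s Hr Hz Hs)
      (fun z Hz => BR z s Hz Hs) (fun r Hr => Bz r s Hr Hs) Hnu). }
  assert (CEd : Cont1 Ed) by (apply (D_cont_s Rr a (fun r z s => 2 * (w1 r z s * d_s w1 r z s) * r)); c3).
  assert (DE : forall s, is_derive E s (Ed s)).
  { intros s. apply (D_deriv_s Rr a (fun r z s => w1 r z s ^ 2 * r) (fun r z s => 2 * (w1 r z s * d_s w1 r z s) * r)); try c3.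
    intros r z s0. eapply deq. apply (dmult (fun s => w1 r z s ^ 2) (fun _ => r)). apply is_derive_pow.
    apply (Derive_correct _ _ (esw r z s0)). apply dconst. unfold d_s; simpl; ring. }
  assert (FT := FTC1 E Ed 0 t DE CEd).
  assert (CsG : Cont1 sG).
  { apply C2_Cont1. apply (C2_multf (fun _ _ => 2 * PI) (fun s _ => D Rr a (fun r z => (d_r w1 r z s ^ 2 + d_z w1 r z s ^ 2) * r))).
    c2k. apply Cont1_C2. apply (D_cont_s Rr a (fun r z s => (d_r w1 r z s ^ 2 + d_z w1 r z s ^ 2) * r)). c3. }
  assert (CsU : Cont1 sU).
  { apply C2_Cont1. apply (C2_multf (fun _ _ => 2 * PI) (fun s _ => D Rr a (fun r z => u1 r z s ^ 4 * r))).
    c2k. apply Cont1_C2. apply (D_cont_s Rr a (fun r z s => u1 r z s ^ 4 * r)). c3. }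
  assert (CsZ : Cont1 sZ).
  { intros s. apply (param1 (fun s z => w1 0 z s ^ 2) (-a) a).
    apply (cont3_sl_r (fun r z s => w1 r z s ^ 2) 0). c3. }
  assert (CsN : Cont1 sN).
  { apply C2_Cont1. apply (C2_pow (fun s _ => rpow (2 * PI * D Rr a (fun r z => rpow (Rabs (F1 r z s)) (6/5) * r)) (1 / (6/5))) 2).
    apply (C2_comp1 (fun x => rpow x (1 / (6/5))) (fun s _ => 2 * PI * D Rr a (fun r z => rpow (Rabs (F1 r z s)) (6/5) * r))).
    intros; apply rpow_cont; lra.
    apply (C2_multf (fun _ _ => 2 * PI) (fun s _ => D Rr a (fun r z => rpow (Rabs (F1 r z s)) (6/5) * r))). c2k.
    apply Cont1_C2. apply (D_cont_s Rr a (fun r z s => rpow (Rabs (F1 r z s)) (6/5) * r)). c3. }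
  set (c := 2 * PI * (k ^ 2 / nu)).
  assert (Hle : RInt (fun s => PI * Ed s) 0 t <= RInt (fun s => (1 / nu * sU s + c * sN s) - (nu / 2 * sG s + nu * sZ s)) 0 t).
  { apply RInt_le; try lra.
    apply exR_scal, exR_cont; auto.
    apply exR_minus; apply exR_plus; apply exR_scal, exR_cont; auto.
    intros s Hs. assert (K := SL s Hs). cbv beta. unfold c. lra. }
  rewrite RIntR_scal in Hle by (apply exR_cont; auto).
  assert (XU := exR_scal sU (1/nu) 0 t (exR_cont _ _ _ CsU)).
  assert (XN := exR_scal sN c 0 t (exR_cont _ _ _ CsN)).
  assert (XG := exR_scal sG (nu/2) 0 t (exR_cont _ _ _ CsG)).
  assert (XZ := exR_scal sZ nu 0 t (exR_cont _ _ _ CsZ)).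
  rewrite (RIntR_minus (fun s => 1 / nu * sU s + c * sN s) (fun s => nu / 2 * sG s + nu * sZ s) 0 t
     (exR_plus _ _ _ _ XU XN) (exR_plus _ _ _ _ XG XZ)) in Hle.
  rewrite (RIntR_plus (fun s => 1 / nu * sU s) (fun s => c * sN s) 0 t XU XN) in Hle.
  rewrite (RIntR_plus (fun s => nu / 2 * sG s) (fun s => nu * sZ s) 0 t XG XZ) in Hle.
  rewrite (RIntR_scal sU (1/nu) 0 t (exR_cont _ _ _ CsU)), (RIntR_scal sN c 0 t (exR_cont _ _ _ CsN)),
    (RIntR_scal sG (nu/2) 0 t (exR_cont _ _ _ CsG)), (RIntR_scal sZ nu 0 t (exR_cont _ _ _ CsZ)) in Hle.
  rewrite FT in Hle.
  assert (N0 : 0 <= RInt sN 0 t).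
  { apply RIntR_ge0. lra. apply exR_cont; exact CsN. intros x _. unfold sN. apply pow2_ge_0. }
  assert (E0 : 0 <= E 0).
  { unfold E. apply (D_ge0 Rr a (fun r z => w1 r z 0 ^ 2 * r)). lra. lra. apply (C2_multf (fun r z => w1 r z 0 ^ 2) (fun r _ => r)). apply (C2_pow (fun r z => w1 r z 0)). apply cont3_slice; auto. apply C2_id1.
    intros r z Hr Hz; apply Rmult_le_pos; [apply pow2_ge_0|lra]. }
  change (1 / 2 * (2 * PI * E t) + nu / 2 * RInt sG 0 t + nu * RInt sZ 0 t <=
     1 / nu * RInt sU 0 t + c * (sqrt (RInt sN 0 t)) ^ 2 + 2 * PI * E 0).
  rewrite pow2_sqrt by auto.
  assert (0 <= PI * E 0) by (apply Rmult_le_pos; lra).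
  lra.
Qed.
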